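(* In the setting below, if $p,q\in X$ satisfy $S_p\cap S_q=\emptyset$, then at most one of $p,q$ has a strange index.
   Context: Setting: $E=\{e_0,\dots,e_n\}\subset\mathbb R^n$ is the vertex set of an $n$-simplex with $e_0+\cdots+e_n=0$, and $X\subset\mathbb R^n\setminus\{0\}$ is a finite set with $E\subseteq X$, no element of $X$ a positive multiple of another, such that every $n+1$ points of $X$ are in good position. (A finite set $A$ is in conical position if $0\notin\operatorname{conv}A$ and no point of $A$ lies in the positive hull—set of nonnegative linear combinations—of the other points; it is in good position otherwise.) For $p\in X$, the support $S_p$ is the minimal subset of $E$ whose positive hull contains $p$; then $p=\sum_{e_i\in S_p}\lambda_ie_i$ uniquely with all $\lambda_i>0$. Convention: each $p\in X$ is replaced by the positive multiple for which $\min_{e_i\in S_p}\lambda_i=1$. An element $e_j\in S_p$ is a strange index of $p$ if $\lambda_j>1$ (under these hypotheses there is at most one). *)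

(* Defs.v *)
From HB Require Import structures.
From mathcomp Require Import all_boot all_order all_algebra finmap.
From mathcomp Require Import reals.
Set Implicit Arguments. Unset Strict Implicit. Unset Printing Implicit Defensive.
Import Order.TTheory GRing.Theory Num.Theory.
Local Open Scope ring_scope.
Local Open Scope fset_scope.

Section Defs.
Variables (R : realType) (n : nat).
Notation V := 'rV[R]_n.

Definition in_pos_hull (A : {fset V}) (x : V) : Prop :=
  exists w : V -> R, (forall a, a \in A -> 0 <= w a) /\
                     x = \sum_(a <- A) w a *: a.

Definition in_conv (A : {fset V}) (x : V) : Prop :=
  exists w : V -> R, (forall a, a \in A -> 0 <= w a) /\
                     \sum_(a <- A) w a = 1 /\
                     x = \sum_(a <- A) w a *: a.

Definition conical_position (A : {fset V}) : Prop :=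
  ~ in_conv A 0 /\ (forall a, a \in A -> ~ in_pos_hull (A `\ a) a).

Definition good_position (A : {fset V}) : Prop := ~ conical_position A.

(* e : 'I_n.+1 -> V is the vertex family of an n-simplex (affinely independent)
   with e_0 + ... + e_n = 0 *)
Definition simplex_vertices (e : 'I_n.+1 -> V) : Prop :=
  row_free (\matrix_(i < n) (e (lift ord0 i) - e ord0)) /\
  \sum_(i < n.+1) e i = 0.

Definition in_pos_hull_idx (e : 'I_n.+1 -> V) (S : {set 'I_n.+1}) (p : V) : Prop :=
  exists l : 'I_n.+1 -> R, (forall i, i \in S -> 0 <= l i) /\
                           p = \sum_(i in S) l i *: e i.

Definition is_support (e : 'I_n.+1 -> V) (S : {set 'I_n.+1}) (p : V) : Prop :=
  in_pos_hull_idx e S p /\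
  (forall S' : {set 'I_n.+1}, S' \proper S -> ~ in_pos_hull_idx e S' p).

(* e_j is a strange index of p (with support S): writing the normalized
   multiple p / c (c > 0) as sum_{i in S} l_i e_i with all l_i > 0 and
   min_{i in S} l_i = 1, we have l_j > 1. *)
Definition strange_index (e : 'I_n.+1 -> V) (S : {set 'I_n.+1}) (p : V)
    (j : 'I_n.+1) : Prop :=
  j \in S /\
  exists (c : R) (l : 'I_n.+1 -> R),
    0 < c /\ (forall i, i \in S -> 0 < l i) /\
    p = c *: \sum_(i in S) l i *: e i /\
    (forall i, i \in S -> 1 <= l i) /\ (exists2 k, k \in S & l k = 1) /\
    1 < l j.

Definition has_strange_index (e : 'I_n.+1 -> V) (S : {set 'I_n.+1}) (p : V) : Prop :=
  exists j, strange_index e S p j.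

Definition admissible_X (e : 'I_n.+1 -> V) (X : {fset V}) : Prop :=
  [/\ forall p, p \in X -> p != 0,
      forall i, e i \in X,
      forall p q, p \in X -> q \in X -> p != q -> ~ exists2 c : R, 0 < c & p = c *: q
    & forall A : {fset V}, A `<=` X -> #|` A| = n.+1 -> good_position A].

End Defs.

(* Main.v *)
Require Import Defs.
From HB Require Import structures.
From mathcomp Require Import all_boot all_order all_algebra finmap.
From mathcomp Require Import reals ring lra zify.
Import Order.TTheory GRing.Theory Num.Theory.
Local Open Scope ring_scope.

Lemma functional (R : realType) (n : nat) (e : 'I_n.+1 -> 'rV[R]_n)
  (f : 'I_n.+1 -> R) :
  simplex_vertices e -> \sum_i f i = 0 ->
  exists u : 'cV[R]_n, forall i, (e i *m u) 0 0 = f i.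
Proof.
move=> [Mfree Hsum] Hf.
set M := \matrix_(i < n) (e (lift ord0 i) - e ord0).
have Mu : M \in unitmx by rewrite -row_free_unit.
set v : 'cV[R]_n := \col_i (f (lift ord0 i) - f ord0).
exists (invmx M *m v).
pose phi := fun x : 'rV[R]_n => (x *m (invmx M *m v)) 0 0.
have Hd : forall i, phi (e (lift ord0 i)) = phi (e ord0) + (f (lift ord0 i) - f ord0).
  move=> i.
  have : phi (e (lift ord0 i) - e ord0) = v i 0.
    have -> : e (lift ord0 i) - e ord0 = row i M by apply/rowP => k; rewrite !mxE.
    by rewrite /phi -row_mul mulmxA mulmxV // mul1mx mxE.
  rewrite /phi mulmxBl mxE [v i 0]mxE => H.
  rewrite -H !mxE; ring.
have H0 : phi (e ord0) = f ord0.
  have : phi (\sum_i e i) = 0 by rewrite Hsum /phi mul0mx mxE.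
  rewrite /phi mulmx_suml summxE big_ord_recl.
  under eq_bigr => i _ do rewrite -/(phi _) Hd.
  rewrite big_split /= sumr_const card_ord.
  move: Hf; rewrite big_ord_recl => Hf.
  rewrite -/(phi _) sumrB sumr_const card_ord.
  set a := phi (e ord0).
  have -> : \sum_(i < n) f (lift ord0 i) = - f ord0 by apply/eqP; rewrite -addr_eq0 addrC Hf.
  move=> H.
  have : (n.+1%:R : R) * (a - f ord0) = 0.
    rewrite -H mulrS; ring.
  move/eqP; rewrite mulf_eq0 pnatr_eq0 /= subr_eq0 => /eqP //.
move=> i; case: (unliftP ord0 i) => [j ->|->].
  by rewrite -/(phi _) Hd H0; ring.
exact: H0.
Qed.

Lemma psi_ex (R : realType) (n : nat) (e : 'I_n.+1 -> 'rV[R]_n) (x y : 'I_n.+1) :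
  simplex_vertices e ->
  exists u : 'cV[R]_n, forall i, (e i *m u) 0 0 = (i == x)%:R - (i == y)%:R.
Proof.
move=> H; apply: functional => //.
have E : forall z : 'I_n.+1, \sum_i ((i == z)%:R : R) = 1.
  move=> z; rewrite (bigD1 z) //= eqxx big1 => [|i /negbTE -> //]; by rewrite addr0.
by rewrite sumrB !E subrr.
Qed.

Lemma sum_ind (R : realType) (n : nat) (S : {set 'I_n.+1}) (l : 'I_n.+1 -> R) x y :
  \sum_(i in S) l i * ((i == x)%:R - (i == y)%:R) =
  (x \in S)%:R * l x - (y \in S)%:R * l y.
Proof.
have E : forall z, \sum_(i in S) l i * (i == z)%:R = (z \in S)%:R * l z.
  move=> z; rewrite (big_setID [set z]) /= .
  rewrite [X in _ + X]big1 ?addr0; last by move=> i; rewrite !inE => /andP[/negbTE -> _]; rewrite mulr0.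
  case: (boolP (z \in S)) => zS.
    rewrite (_ : S :&: [set z] = [set z]); last by apply/setIidPr; rewrite sub1set.
    by rewrite big_set1 eqxx mulr1 mul1r.
  rewrite (_ : S :&: [set z] = set0) ?big_set0 ?mul0r //.
  by apply/setP => i; rewrite !inE; apply/negbTE; apply: contra zS => /andP[iS /eqP <-].
under eq_bigr do rewrite mulrBr.
by rewrite sumrB !E.
Qed.

Lemma zero_of (R : realType) (x t y : R) : 0 <= x -> 0 < t -> 0 <= y -> x * t + y = 0 -> x = 0.
Proof. move=> *; nra. Qed.
Lemma zero_of2 (R : realType) (x c : R) : 0 < c -> x * c = 0 -> x = 0.
Proof. move=> *; nra. Qed.
Lemma neg_of (R : realType) (x c d : R) : 0 < c -> 0 <= x -> 0 < d -> x * c = -1 * d -> False.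
Proof. move=> *; nra. Qed.

Arguments zero_of {R x t y}. Arguments zero_of2 {R x c}. Arguments neg_of {R x c d}.
Local Open Scope fset_scope.
Theorem proposition6p4 (R : realType) (n : nat) (e : 'I_n.+1 -> 'rV[R]_n)
    (X : {fset 'rV[R]_n}) :
  simplex_vertices e -> admissible_X e X ->
  forall (p q : 'rV[R]_n) (Sp Sq : {set 'I_n.+1}),
    p \in X -> q \in X -> is_support e Sp p -> is_support e Sq q ->
    Sp :&: Sq = set0 ->
    ~ (has_strange_index e Sp p /\ has_strange_index e Sq q).
Proof.
move=> simp [Xn0 eX Xmul Xgood] p q Sp Sq pX qX _ _ dis
  [[j [jSp [cp [l [cp0 [lpos [pE [lge [[r rSp lr] lj]]]]]]]]]
   [k [kSq [cq [m [cq0 [mpos [qE [mge [[s sSq ms] mk]]]]]]]]]].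
have dj : forall i, i \in Sp -> i \notin Sq.
  move=> i ip; apply/negP => iq.
  have : i \in Sp :&: Sq by rewrite inE ip iq.
  by rewrite dis inE.
clear dis.
have jSq := dj _ jSp; have rSq := dj _ rSp.
have kSp : k \notin Sp by apply: contra (dj k) _; rewrite kSq.
have sSp : s \notin Sp by apply: contra (dj s) _; rewrite sSq.
have phiE : forall (u : 'cV[R]_n) (w : 'rV[R]_n -> R) (B : seq 'rV[R]_n),
    ((\sum_(b <- B) w b *: b) *m u) 0 0 = \sum_(b <- B) w b * (b *m u) 0 0.
  by move=> u w B; rewrite mulmx_suml summxE; apply: eq_bigr => b _; rewrite -scalemxAl mxE.
have valE : forall x y (u : 'cV[R]_n),
    (forall i, (e i *m u) 0 0 = (i == x)%:R - (i == y)%:R) ->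
    forall (c : R) (l : 'I_n.+1 -> R) (S : {set 'I_n.+1}), ((c *: \sum_(i in S) l i *: e i) *m u) 0 0 =
    c * ((x \in S)%:R * l x - (y \in S)%:R * l y).
  move=> x y u Hu c l' S; rewrite -scalemxAl mxE mulmx_suml summxE -sum_ind.
  by congr (_ * _); apply: eq_bigr => i _; rewrite -scalemxAl mxE Hu.
have einj : injective e.
  move=> x y exy; apply/eqP; apply/negP => /negP nxy.
  have [u Hu] := @psi_ex _ _ e x y simp.
  have := Hu x; rewrite exy Hu eqxx (negbTE nxy) eq_sym (negbTE nxy).
  rewrite (eqxx x) /= => /eqP; rewrite ?mulr0n ?mulr1n. lra.
pose P := [set i | (i != r) && (i != s)].
pose A := p |` (q |` [fset e i | i in P]).
have rs : r != s by apply: contraNneq sSp => <-.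
have ur := @psi_ex _ _ e r s simp.
case: ur => [urs Hrs].
have prs : (p *m urs) 0 0 = cp.
  by rewrite pE (valE _ _ _ Hrs) rSp (negbTE sSp) /= ?mulr1n ?mulr0n ?mul1r ?mul0r ?subr0 lr mulr1.
have qrs : (q *m urs) 0 0 = - cq.
  by rewrite qE (valE _ _ _ Hrs) sSq (negbTE rSq) /= ?mulr1n ?mulr0n ?mul1r ?mul0r ?sub0r ms mulrN1.
have ers : forall i, i \in P -> (e i *m urs) 0 0 = 0.
  by move=> i; rewrite inE Hrs => /andP[/negbTE -> /negbTE ->]; rewrite subrr.
have pB : p \notin [fset e i | i in P].
  apply/negP => /imfsetP [i /= iP pei]; move: prs; rewrite pei ers //; lra.
have qB : q \notin [fset e i | i in P].
  apply/negP => /imfsetP [i /= iP pei]; move: qrs; rewrite pei ers //; lra.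
have pq : p \notin q |` [fset e i | i in P].
  rewrite in_fset1U negb_or (negbTE pB) andbT; apply/eqP => epq.
  by move: prs; rewrite epq qrs; lra.
have splitA : forall g : 'rV[R]_n -> R,
    \sum_(b <- A) g b = (g p + g q + \sum_(i in P) g (e i))%R.
  move=> g; rewrite big_fsetU1 // big_fsetU1 // big_imfset /=; last by move=> ? ? _ _; apply: einj.
  by rewrite addrA big_enum.
have cardA : #|` A| = n.+1.
  rewrite cardfsU1 pq cardfsU1 qB card_in_imfset /=; last by move=> ? ? _ _; apply: einj.
  have -> : P = ~: [set r; s] by apply/setP => i; rewrite !inE negb_or.
  have := cardsC [set r; s]; rewrite cards2 rs card_ord -cardE.
  move=> H; rewrite addnA; exact: H.
have key : forall w : 'rV[R]_n -> R, \sum_(b <- A) w b *: b = 0 -> forall x y,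
  (w p * (cp * ((x \in Sp)%:R * l x - (y \in Sp)%:R * l y)) +
   w q * (cq * ((x \in Sq)%:R * m x - (y \in Sq)%:R * m y)) +
   ((x \in P)%:R * w (e x) - (y \in P)%:R * w (e y)) = 0)%R.
  move=> w Hw x y; have [u Hu] := @psi_ex _ _ e x y simp.
  have vp : (p *m u) 0 0 = (cp * ((x \in Sp)%:R * l x - (y \in Sp)%:R * l y))%R.
    by rewrite {1}pE (valE _ _ _ Hu).
  have vq : (q *m u) 0 0 = (cq * ((x \in Sq)%:R * m x - (y \in Sq)%:R * m y))%R.
    by rewrite {1}qE (valE _ _ _ Hu).
  have := congr1 (fun z => (z *m u) 0 0) Hw; rewrite /= phiE splitA mul0mx vp vq [X in _ = X]mxE.
  move=> <-; congr (_ + _)%R; rewrite -(@sum_ind _ _ P (fun i => w (e i))).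
  by apply: eq_bigr => i _; rewrite Hu.
have jr : j != r by apply/eqP => jr; move: lj; rewrite jr lr ltxx.
have ks : k != s by apply/eqP => ks; move: mk; rewrite ks ms ltxx.
have js : j != s by apply: contraNneq jSq => ->.
have kr : k != r by apply: contraNneq rSq => <-.
have jk : j != k by apply: contraNneq jSq => ->.
have jP : j \in P by rewrite inE jr js.
have kP : k \in P by rewrite inE kr ks.
have rP : (r \in P) = false by rewrite inE eqxx.
have sP : (s \in P) = false by rewrite inE eqxx andbF.
have F1 : forall w, \sum_(b <- A) w b *: b = 0 -> (w q * cq = w p * cp)%R.
  move=> w Hw; have := key w Hw s r.
  rewrite (negbTE sSp) rSp sSq (negbTE rSq) sP rP lr ms /=.
  rewrite ?mulr1n ?mulr0n ?mul1r ?mul0r ?subr0 ?sub0r ?addr0 ?add0r ?mulr1 ?mulrN1.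
  move=> H; lra.
have F2 : forall w, \sum_(b <- A) w b *: b = 0 -> (w p * cp * (l j - 1) + w (e j) = 0)%R.
  move=> w Hw; have := key w Hw j r.
  rewrite jSp rSp (negbTE jSq) (negbTE rSq) jP rP lr /=.
  rewrite ?mulr1n ?mulr0n ?mul1r ?mul0r ?subr0 ?sub0r ?addr0 ?add0r ?mulr1 ?mulrN1 ?mulr0.
  move=> H; rewrite -H; ring.
have F3 : forall w, \sum_(b <- A) w b *: b = 0 -> (w q * cq * (m k - 1) + w (e k) = 0)%R.
  move=> w Hw; have := key w Hw k s.
  rewrite kSq sSq (negbTE kSp) (negbTE sSp) kP sP ms /=.
  rewrite ?mulr1n ?mulr0n ?mul1r ?mul0r ?subr0 ?sub0r ?addr0 ?add0r ?mulr1 ?mulrN1 ?mulr0.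
  move=> H; rewrite -H; ring.
have F4 : forall w, \sum_(b <- A) w b *: b = 0 -> forall i, i \in P ->
    w p = 0 -> w q = 0 -> w (e i) = 0.
  move=> w Hw i iP wp wq; have := key w Hw i r.
  rewrite wp wq iP rP /= !mul0r ?mulr1n ?mulr0n ?mul1r ?mul0r ?subr0 ?add0r //.
have pA : p \in A by rewrite !inE eqxx.
have qA : q \in A by rewrite !inE eqxx orbT.
have eA : forall i, i \in P -> e i \in A.
  by move=> i iP; rewrite !inE; apply/orP; right; apply/orP; right; apply: in_imfset.
apply: (Xgood A _ cardA).
  apply/fsubsetP => b; rewrite !in_fset1U.
  case/orP => [/eqP -> //|]; case/orP => [/eqP -> //|/imfsetP [i _ ->]]; exact: eX.
split.
  move=> [w [w0 [w1 wE]]].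
  have Hw := esym wE.
  have := F2 w Hw; have := F1 w Hw; have := w0 _ pA; have := w0 _ qA; have := w0 _ (eA _ jP).
  move=> h1 h2 h3 h4 h5.
  have ht : (0 < cp * (l j - 1))%R by apply: mulr_gt0 => //; rewrite subr_gt0.
  have wp : w p = 0 by apply: (zero_of h3 ht h1); rewrite mulrA.
  have wq : w q = 0 by apply: (zero_of2 cq0); rewrite h4 wp mul0r.
  move: w1; rewrite splitA wp wq big1 => [|i iP]; last exact: F4.
  rewrite !add0r => /eqP; rewrite eq_sym oner_eq0 //.
move=> a aA [w [w0 wE]].
pose w' := fun b => if b == a then (-1)%R else w b.
have Hw : \sum_(b <- A) w' b *: b = 0.
  rewrite (big_fsetD1 a aA) /= /w' eqxx scaleN1r.
  have -> : \sum_(b <- A `\ a) (if b == a then (-1)%R else w b) *: b =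
            \sum_(b <- A `\ a) w b *: b.
    by apply: eq_fbigr => b /fsetD1P [ba _] _; rewrite (negbTE ba).
  by rewrite -wE addNr.
have w'0 : forall b, b \in A -> b != a -> (0 <= w' b)%R.
  by move=> b bA ba; rewrite /w' (negbTE ba); apply: w0; apply/fsetD1P.
have w'a : w' a = (-1)%R by rewrite /w' eqxx.
have := F1 _ Hw; have := F2 _ Hw; have := F3 _ Hw.
move=> h3 h2 h1.
have pnq : p != q by apply: contraNneq pq => ->; rewrite fset1U1.
move: aA; rewrite !in_fset1U => /orP [/eqP ea|/orP [/eqP ea|/imfsetP [i0 /= i0P ea]]].
- have := w'0 _ qA; rewrite ea eq_sym pnq => /(_ isT) h4.
  by move: h1; rewrite -ea w'a; apply: neg_of.
- have := w'0 _ pA; rewrite ea pnq => /(_ isT) h4.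
  by move: h1; rewrite -ea w'a => /esym; apply: neg_of.
- have hp := w'0 _ pA; have hq := w'0 _ qA.
  have pa : p != a by rewrite ea; apply: contraNneq pB => ->; apply: in_imfset.
  have qa : q != a by rewrite ea; apply: contraNneq qB => ->; apply: in_imfset.
  move: (hp pa) (hq qa) => {hp hq} hp hq.
  have [wp wq] : w' p = 0 /\ w' q = 0.
    case: (eqVneq i0 j) => [ij|ij].
      have hk := w'0 _ (eA _ kP).
      have : e k != a by rewrite ea; apply/eqP => /einj kj; move: jk; rewrite -ij kj eqxx.
      move/hk => {}hk.
      have ht : (0 < cq * (m k - 1))%R by apply: mulr_gt0 => //; rewrite subr_gt0.
      have wq : w' q = 0 by apply: (zero_of hq ht hk); rewrite mulrA.
      split=> //; apply: (zero_of2 cp0); by rewrite -h1 wq mul0r.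
    have hj := w'0 _ (eA _ jP).
    have : e j != a.
      by rewrite ea; apply/eqP => /einj ji; move: ij; rewrite ji eqxx.
    move/hj => {}hj.
    have ht : (0 < cp * (l j - 1))%R by apply: mulr_gt0 => //; rewrite subr_gt0.
    have wp : w' p = 0 by apply: (zero_of hp ht hj); rewrite mulrA.
    split=> //; apply: (zero_of2 cq0); by rewrite h1 wp mul0r.
  have := F4 _ Hw _ i0P wp wq; rewrite -ea w'a => /eqP; rewrite oppr_eq0 oner_eq0 //.
Qed.
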